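(* Let $X$ be a complex torus of dimension $g$ with period matrix $\Pi=(\tau\ \ I_g)$, where $\tau=(\tau_{ij})\in M_g(\mathbb{C})$ satisfies $\det(\operatorname{Im}\tau)\neq0$. Consider the $\mathbb{Q}$-linear map $$T:\mathbb{Q}^{\frac{g(g-1)}{2}}\times\mathbb{Q}^{g^2}\times\mathbb{Q}^{\frac{g(g-1)}{2}}\to\mathbb{C}^{\frac{g(g-1)}{2}},\qquad \big((a_{ij})_{1\le i<j\le g},(b_{ij})_{1\le i,j\le g},(c_{ij})_{1\le i<j\le g}\big)\mapsto (w_{ij})_{1\le i<j\le g},$$ where $$w_{ij}=a_{ij}+\sum_{k=1}^g\big(b_{jk}\tau_{ki}-b_{ik}\tau_{kj}\big)+\sum_{1\le l<k\le g}c_{lk}\big(\tau_{kj}\tau_{li}-\tau_{lj}\tau_{ki}\big).$$ Then the Picard number satisfies $\rho(X)=\dim_{\mathbb{Q}}\ker T=2g^2-g-\operatorname{rank}_{\mathbb{Q}}(T)$, where $\operatorname{rank}_{\mathbb{Q}}(T)$ is the $\mathbb{Q}$-dimension of the image of $T$.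
   Context: A complex torus of dimension $g$ with period matrix $\Pi=(\tau\ \ I_g)$ is $X=\mathbb{C}^g/\Lambda$, where $\Lambda$ is the lattice generated by the $2g$ columns of $\Pi$. The Picard number $\rho(X)$ is the rank of the Néron–Severi group $\mathrm{NS}(X)$. *)

(* Defs.v *)
From HB Require Import structures.
From mathcomp Require Import all_boot all_order all_algebra.
From mathcomp Require Import reals.
From mathcomp Require Import complex.
Set Implicit Arguments. Unset Strict Implicit. Unset Printing Implicit Defensive.
Import Order.TTheory GRing.Theory Num.Theory.
Local Open Scope ring_scope.

Definition zfree (V : zmodType) (m : nat) (v : 'I_m -> V) : Prop :=
  forall c : 'I_m -> int, \sum_(k < m) (v k *~ c k) = 0 -> forall k, c k = 0.

(* The subset S of V has rank n: it contains n Z-linearly independent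
   elements but not n+1.  For a subgroup of a torsion-free group this is the
   rank of the group; for a Q-subspace of a Q-vector space it is its Q-dimension. *)
Definition has_rank (V : zmodType) (S : V -> Prop) (n : nat) : Prop :=
  (exists v : 'I_n -> V, (forall k, S (v k)) /\ zfree v) /\
  (forall v : 'I_n.+1 -> V, (forall k, S (v k)) -> ~ zfree v).

Definition period_matrix (R : realType) (g : nat) (tau : 'M[R[i]]_g)
  : 'M[R[i]]_(g, g + g) := row_mx tau 1%:M.

(* Neron-Severi group via Appell-Humbert: hermitian forms H(v,w) = v^T H conj(w)
   on C^g whose imaginary part is integer-valued on the lattice Lambda generated
   by the columns of Pi. *)
Definition NS (R : realType) (g : nat) (tau : 'M[R[i]]_g) (H : 'M[R[i]]_g) : Prop :=
  (forall i j, H i j = conjc (H j i)) /\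
  (forall a b : 'I_(g + g),
     exists z : int,
       complex.Im (((col a (period_matrix tau))^T *m H
             *m map_mx (@conjc R) (col b (period_matrix tau))) ord0 ord0)
       = z%:~R).

Definition picard_number (R : realType) (g : nat) (tau : 'M[R[i]]_g) (rho : nat) : Prop :=
  has_rank (NS tau) rho.

Definition Pidx (g : nat) := {p : 'I_g * 'I_g | (p.1 < p.2)%N}.

Definition Tdom (g : nat) :=
  ({ffun Pidx g -> rat} * {ffun 'I_g * 'I_g -> rat} * {ffun Pidx g -> rat})%type.

Definition Tmap (R : realType) (g : nat) (tau : 'M[R[i]]_g) (x : Tdom g)
  : {ffun Pidx g -> R[i]} :=
  let a := x.1.1 in let b := x.1.2 in let c := x.2 in
  [ffun p : Pidx g =>
     let i := (val p).1 in let j := (val p).2 in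
     ratr (a p)
     + \sum_(k < g) (ratr (b (j, k)) * tau k i - ratr (b (i, k)) * tau k j)
     + \sum_(q : Pidx g)
         ratr (c q) * (tau (val q).2 j * tau (val q).1 i
                       - tau (val q).1 j * tau (val q).2 i)].

Definition kerT (R : realType) (g : nat) (tau : 'M[R[i]]_g) (x : Tdom g) : Prop :=
  Tmap tau x = 0.

Definition imT (R : realType) (g : nat) (tau : 'M[R[i]]_g) (y : {ffun Pidx g -> R[i]}) : Prop :=
  exists x, Tmap tau x = y.

(* Main.v *)
Require Import Defs.
From HB Require Import structures.
From mathcomp Require Import all_boot all_order all_algebra.
From mathcomp Require Import reals complex.
From Stdlib Require Import Classical.
From mathcomp Require Import zify ring lra.
Set Implicit Arguments. Unset Strict Implicit. Unset Printing Implicit Defensive.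
Import Order.TTheory GRing.Theory Num.Theory.
Local Open Scope ring_scope.

Lemma clear_den (I : finType) (x : I -> rat) :
  exists2 m : nat, (0 < m)%N & forall i, exists z : int, (z%:~R : rat) = x i * m%:R.
Proof.
exists (\prod_i `|denq (x i)|%N)%N.
  by rewrite prodn_gt0 // => i; rewrite absz_gt0 denq_neq0.
move=> i; exists (numq (x i) * \prod_(j | j != i) denq (x j)).
have E : forall j, (`|denq (x j)|%N%:R : rat) = (denq (x j))%:~R.
  by move=> j; rewrite natr_absz ger0_norm // ltW // denq_gt0.
rewrite natr_prod [in RHS](bigD1 i) //= intrM numqE rmorph_prod /= -mulrA E.
congr (_ * (_ * _)); by apply: eq_bigr => j _; rewrite E.
Qed.

Section Add.
Variables (U V : zmodType) (f : U -> V).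
Hypothesis fD : forall x y, f (x + y) = f x + f y.
Lemma fadd0 : f 0 = 0.
Proof. by apply: (@addrI _ (f 0)); rewrite -fD !addr0. Qed.
Lemma faddN x : f (- x) = - f x.
Proof. by apply/eqP; rewrite -subr_eq0 opprK -fD addNr fadd0. Qed.
Lemma faddMn x n : f (x *+ n) = f x *+ n.
Proof. by elim: n => [|n IH]; rewrite ?mulr0n ?fadd0 // !mulrS fD IH. Qed.
Lemma faddMz x z : f (x *~ z) = f x *~ z.
Proof. case: z => n; first exact: faddMn.
by rewrite NegzE !mulrNz faddN -!pmulrn faddMn. Qed.
Lemma faddsum (I : finType) (F : I -> U) : f (\sum_i F i) = \sum_i f (F i).
Proof. exact: (big_morph f fD fadd0). Qed.
End Add.

Lemma zdep d (v : 'I_d.+1 -> 'rV[rat]_d) :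
  exists c : 'I_d.+1 -> int, (exists k, c k != 0) /\ \sum_k v k *~ c k = 0.
Proof.
pose A := \matrix_(k < d.+1) v k.
have nf : kermx A != 0.
  rewrite kermx_eq0 /row_free; apply/negP => /eqP E.
  by have := rank_leq_col A; rewrite E ltnn.
have [u /sub_kermxP uA u0] := rowV0Pn nf.
have [i ui] := rV0Pn _ u0.
have [m m0 hz] := clear_den (fun k => u 0 k).
have [c hc] := fin_all_exists hz.
exists c; split.
  exists i; apply/negP => /eqP ci; move: (hc i); rewrite ci /= => /esym/eqP.
  by rewrite mulf_eq0 (negbTE ui) /= pnatr_eq0 => /eqP m00; rewrite m00 in m0.
transitivity (m%:R *: (u *m A)); last by rewrite uA scaler0.
rewrite mulmx_sum_row scaler_sumr; apply: eq_bigr => k _.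
by rewrite -scaler_int hc rowK scalerA mulrC.
Qed.

Lemma CL (V : zmodType) (S : V -> Prop) (d : nat) (f : 'rV[rat]_d -> V) :
  (forall x y, f (x + y) = f x + f y) -> injective f ->
  (forall x, exists2 m : nat, (0 < m)%N & S (f (x *+ m))) ->
  (forall s, S s -> exists x, f x = s) -> has_rank S d.
Proof.
move=> fD finj hS hsurj; split.
  have [m m0 hm] := fin_all_exists2 (fun k : 'I_d => hS (delta_mx 0 k)).
  exists (fun k => f (delta_mx 0 k *+ m k)); split => // c hc k.
  have : \sum_j (delta_mx 0 j *+ m j) *~ c j = 0 :> 'rV[rat]_d.
    apply: finj; rewrite fadd0 // faddsum //; rewrite -[RHS]hc.
    by apply: eq_bigr => j _; rewrite faddMz.
  pose w : 'rV[rat]_d := \row_j ((c j)%:~R * (m j)%:R).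
  have -> : \sum_j (delta_mx 0 j *+ m j) *~ c j = w.
    rewrite [RHS]row_sum_delta; apply: eq_bigr => j _.
    by rewrite -scaler_int -scaler_nat scalerA mxE.
  move/rowP/(_ k); rewrite !mxE => /eqP; rewrite mulf_eq0 pnatr_eq0 intr_eq0.
  by case/orP => /eqP // m00; move: (m0 k); rewrite m00.
move=> v hv hfree.
have [x hx] := fin_all_exists (fun k => hsurj _ (hv k)).
have [c [[k ck] hc]] := zdep x.
move/negP: ck; apply; apply/eqP; apply: (hfree c) => //.
transitivity (f (\sum_k x k *~ c k)); last by rewrite hc fadd0.
rewrite faddsum //; apply: eq_bigr => j _.
by rewrite faddMz // hx.
Qed.

Lemma max_basis n (K : 'rV[rat]_n -> Prop) :
  exists d (B : 'M[rat]_(d, n)),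
    row_free B /\ (forall i, K (row i B)) /\ (forall v, K v -> (v <= B)%MS).
Proof.
pose P k := exists B : 'M[rat]_(k, n), row_free B /\ forall i, K (row i B).
have P0 : P 0%N.
  exists 0; split; last by case.
  by rewrite /row_free eqn_leq rank_leq_row.
have Pb : forall k, P k -> (k <= n)%N.
  by move=> k [B [fB _]]; move/eqP: fB => <-; apply: rank_leq_col.
have [d [[B [fB KB]] nPd]] : exists d, P d /\ ~ P d.+1.
  apply: NNPP => H.
  have Pall : forall k, P k.
    elim=> // k IH; apply: NNPP => nk; apply: H; exists k; split => //.
  by have := Pb _ (Pall n.+1); rewrite ltnn.
exists d, B; split => //; split => // v Kv.
apply/negPn/negP => nv; apply: nPd; exists (col_mx v B); split.
  have lt : (B < col_mx v B)%MS.
    rewrite ltmxE col_mx_sub submx_refl /= (negbTE nv) andbT.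
    by rewrite -addsmxE addsmxSr.
  have := rank_ltmx lt; rewrite (eqP fB) => h1.
  by rewrite /row_free eqn_leq rank_leq_row h1.
move=> i; case: (split_ordP (i : 'I_(1 + d))) => j ->; last first.
  suff -> : row (rshift 1 j) (col_mx v B) = row j B by [].
  exact: rowKd.
suff -> : row (lshift d j) (col_mx v B) = v by [].
by rewrite (rowKu j v B); apply/rowP=> k; rewrite mxE ord1.
Qed.


Lemma card_Pidx g : (2 * #|{: Pidx g}| + g = g * g)%N.
Proof.
rewrite card_sig.
have E1 : #|[pred p : 'I_g * 'I_g | (p.1 < p.2)%N]| = (\sum_(i < g) \sum_(j < g) (i < j)%N)%N.
  rewrite -sum1_card pair_big /= big_mkcond /=.
  by apply: eq_bigr => -[i j] _; rewrite inE /=; case: ifP.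
have E2 : (\sum_(i < g) \sum_(j < g) (i < j)%N = \sum_(i < g) \sum_(j < g) (j < i)%N)%N.
  by rewrite exchange_big.
have E3 : (\sum_(i < g) \sum_(j < g) ((i < j)%N + (j < i)%N + (i == j)) = g * g)%N.
  rewrite -[X in (_ = X * _)%N]card_ord -sum_nat_const; apply: eq_bigr => i _.
  rewrite -[X in (_ = X)%N]card_ord -sum1_card; apply: eq_bigr => j _.
  by rewrite -val_eqE /=; case: ltngtP.
have E4 : (\sum_(i < g) \sum_(j < g) (i == j) = g)%N.
  rewrite -[X in (_ = X)%N]card_ord -sum1_card; apply: eq_bigr => i _.
  by rewrite (bigD1 i) //= eqxx big1 // => j /negbTE; rewrite eq_sym => ->.
rewrite -E3 E1 mul2n -addnn {2}E2 -[X in (_ + X)%N = _]E4 -!big_split /=.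
by apply: eq_bigr => i _; rewrite -!big_split.
Qed.

Definition fov (T : finType) (v : 'rV[rat]_#|T|) : {ffun T -> rat} :=
  [ffun t => v 0 (enum_rank t)].
Definition vof (T : finType) (F : {ffun T -> rat}) : 'rV[rat]_#|T| :=
  \row_i F (enum_val i).
Lemma fovK (T : finType) : cancel (@vof T) (@fov T).
Proof. by move=> F; apply/ffunP => t; rewrite !ffunE mxE enum_rankK. Qed.
Lemma vofK (T : finType) : cancel (@fov T) (@vof T).
Proof. by move=> v; apply/rowP => i; rewrite !mxE ffunE enum_valK. Qed.
Lemma fovD (T : finType) v w : @fov T (v + w) = fov v + fov w.
Proof. by apply/ffunP => t; rewrite !ffunE mxE. Qed.
Lemma fovZ (T : finType) q v : @fov T (q *: v) = [ffun t => q * fov v t].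
Proof. by apply/ffunP => t; rewrite !ffunE mxE. Qed.

Definition Nd g := (#|{: Pidx g}| + #|{: 'I_g * 'I_g}| + #|{: Pidx g}|)%N.

Definition iota g (v : 'rV[rat]_(Nd g)) : Tdom g :=
  ((fov (lsubmx (lsubmx v)), fov (rsubmx (lsubmx v))), fov (rsubmx v)).
Definition kappa g (t : Tdom g) : 'rV[rat]_(Nd g) :=
  row_mx (row_mx (vof t.1.1) (vof t.1.2)) (vof t.2).

Lemma iotaK g (t : Tdom g) : iota (kappa t) = t.
Proof. by case: t => [[a b] c]; rewrite /iota /kappa !row_mxKl !row_mxKr !fovK. Qed.
Lemma kappaK g (v : 'rV[rat]_(Nd g)) : kappa (iota v) = v.
Proof. by rewrite /iota /kappa /= !vofK !hsubmxK. Qed.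
Lemma iotaD g (v w : 'rV[rat]_(Nd g)) : iota (v + w) = iota v + iota w.
Proof. by rewrite /iota !linearD /= !fovD. Qed.
Definition scT g q (t : Tdom g) : Tdom g :=
  (([ffun p => q * t.1.1 p], [ffun p => q * t.1.2 p]), [ffun p => q * t.2 p]).
Lemma iotaZ g q (v : 'rV[rat]_(Nd g)) : iota (q *: v) = scT q (iota v).
Proof. by rewrite /iota !linearZ /= !fovZ. Qed.
Lemma iota_inj g : injective (@iota g).
Proof. exact: can_inj (@kappaK g). Qed.
Lemma Nd_val g : Nd g = (2 * g ^ 2 - g)%N.
Proof.
have := card_Pidx g; rewrite /Nd card_prod card_ord => h.
rewrite -h; lia.
Qed.


Lemma sum_Pidx g (V : zmodType) (F : 'I_g * 'I_g -> V) :
  \sum_(p : 'I_g * 'I_g | (p.1 < p.2)%N) F p = \sum_(q : Pidx g) F (val q).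
Proof.
rewrite (reindex_omap (val : Pidx g -> _) insub); last first.
  by move=> i Pi; rewrite insubT.
by apply: eq_bigl => -[i Pi] /=; rewrite Pi insubT /= eqxx.
Qed.

Section T.
Variables (R : realType) (g : nat) (tau : 'M[R[i]]_g).

Definition Tb (b : {ffun 'I_g * 'I_g -> rat}) (i j : 'I_g) : R[i] :=
  \sum_(k < g) (ratr (b (j, k)) * tau k i - ratr (b (i, k)) * tau k j).
Definition Tc (c : {ffun Pidx g -> rat}) (i j : 'I_g) : R[i] :=
  \sum_(q : Pidx g) ratr (c q) * (tau (val q).2 j * tau (val q).1 i
                       - tau (val q).1 j * tau (val q).2 i).
Lemma TmapE (x : Tdom g) p :
  Tmap tau x p = ratr (x.1.1 p) + Tb x.1.2 (val p).1 (val p).2 + Tc x.2 (val p).1 (val p).2.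
Proof. by rewrite ffunE. Qed.

Lemma TbD b b' i j : Tb (b + b') i j = Tb b i j + Tb b' i j.
Proof. by rewrite /Tb -big_split; apply: eq_bigr => k _; rewrite !ffunE !rmorphD /=; ring. Qed.
Lemma TcD c c' i j : Tc (c + c') i j = Tc c i j + Tc c' i j.
Proof. by rewrite /Tc -big_split; apply: eq_bigr => k _; rewrite !ffunE !rmorphD /=; ring. Qed.
Lemma TbZ q (b : {ffun 'I_g * 'I_g -> rat}) i j : Tb [ffun p => q * b p] i j = ratr q * Tb b i j.
Proof. by rewrite /Tb mulr_sumr; apply: eq_bigr => k _; rewrite !ffunE !rmorphM /=; ring. Qed.
Lemma TcZ q (c : {ffun Pidx g -> rat}) i j : Tc [ffun p => q * c p] i j = ratr q * Tc c i j.
Proof. by rewrite /Tc mulr_sumr; apply: eq_bigr => k _; rewrite !ffunE !rmorphM /=; ring. Qed.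

Lemma TmapD (x y : Tdom g) : Tmap tau (x + y) = Tmap tau x + Tmap tau y.
Proof.
apply/ffunP => p; rewrite [RHS]ffunE !TmapE /= TbD TcD ffunE rmorphD /=; ring.
Qed.

Definition pv (a : {ffun Pidx g -> rat}) (i j : 'I_g) : rat :=
  oapp a 0 (insub (i, j) : option (Pidx g)).
Definition Aof (a : {ffun Pidx g -> rat}) : 'M[R[i]]_g :=
  \matrix_(i, j) ratr (pv a i j - pv a j i).
Definition Bof (b : {ffun 'I_g * 'I_g -> rat}) : 'M[R[i]]_g :=
  \matrix_(i, j) ratr (b (i, j)).
Definition Mof (t : Tdom g) : 'M[R[i]]_(g + g) :=
  block_mx (Aof t.1.1) (Bof t.1.2) (- (Bof t.1.2)^T) (Aof t.2).
Definition Wm : 'M[R[i]]_(g + g, g) := col_mx 1%:M (- tau).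

Lemma pv_val a (p : Pidx g) : pv a (val p).1 (val p).2 = a p.
Proof. by rewrite /pv -surjective_pairing valK. Qed.
Lemma pv_ge a (i j : 'I_g) : ~~ (i < j)%N -> pv a i j = 0.
Proof. by move=> h; rewrite /pv insubF //=; apply: negbTE. Qed.

Lemma sum_pv (F : 'I_g -> 'I_g -> R[i]) c :
  \sum_l \sum_k ratr (pv c l k) * F l k
  = \sum_(q : Pidx g) ratr (c q) * F (val q).1 (val q).2.
Proof.
rewrite pair_big /= (bigID (fun p : 'I_g * 'I_g => (p.1 < p.2)%N)) /=.
rewrite [X in _ + X]big1 ?addr0; last first.
  by move=> [l k] /= h; rewrite pv_ge // rmorph0 mul0r.
rewrite sum_Pidx; apply: eq_bigr => q _.
by rewrite pv_val.
Qed.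

Lemma TcE c i j : Tc c i j = \sum_k ((- tau)^T *m Aof c) i k * (- tau) k j.
Proof.
have -> : \sum_k ((- tau)^T *m Aof c) i k * (- tau) k j =
   \sum_l \sum_k ratr (pv c l k) * (tau l i * tau k j)
 - \sum_l \sum_k ratr (pv c k l) * (tau l i * tau k j).
  rewrite -sumrB; under [in RHS]eq_bigr => l _ do rewrite -sumrB.
  rewrite [RHS]exchange_big /=; apply: eq_bigr => k _.
  rewrite !mxE big_distrl /=; apply: eq_bigr => l _.
  by rewrite !mxE rmorphB /=; ring.
rewrite [X in _ - X]exchange_big /= sum_pv sum_pv -sumrB.
by apply: eq_bigr => q _ /=; ring.
Qed.

Lemma key (t : Tdom g) p :
  Tmap tau t p = (Wm^T *m Mof t *m Wm) (val p).1 (val p).2.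
Proof.
rewrite /Wm tr_col_mx mul_row_block mul_row_col trmx1 !mul1mx mulmx1.
rewrite TmapE /Mof.
rewrite !mxE pv_val (pv_ge _ (_ : ~~ ((val p).2 < (val p).1)%N)); last first.
  by rewrite -leqNgt ltnW //; exact: (valP p).
rewrite subr0.
set S2 := \sum_j (Bof _ + _) _ _ * _.
have -> : S2 = \sum_k Bof t.1.2 (val p).1 k * (- tau) k (val p).2
    + Tc t.2 (val p).1 (val p).2.
  by rewrite TcE /S2 -big_split; apply: eq_bigr => k _; rewrite mxE mulrDl.
rewrite !addrA; congr (_ + _); rewrite -addrA; congr (_ + _).
rewrite /Tb -big_split; apply: eq_bigr => k _ /=.
by rewrite !mxE; ring.
Qed.
End T.


Section NS.
Variables (R : realType) (g : nat) (tau : 'M[R[i]]_g).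
Hypothesis hdet : \det (map_mx (@complex.Im R) tau) != 0.
Local Notation cj := (@conjc R).
Definition Pi := period_matrix tau.
Definition Pc := map_mx cj Pi.
Definition Zm := col_mx Pi Pc.

Lemma tau_sub : tau - map_mx cj tau
   = (2%:R * 'i%C) *: map_mx (real_complex R) (map_mx (@complex.Im R) tau).
Proof.
apply/matrixP => i j; rewrite !mxE subcJ; ring.
Qed.

Lemma Z_unit : Zm \in unitmx.
Proof.
rewrite unitmxE unitfE.
have E : block_mx 1%:M (- 1%:M) 0 1%:M *m Zm
    = block_mx (tau - map_mx cj tau) 0 (map_mx cj tau) 1%:M.
  rewrite /Zm /Pc /Pi /period_matrix mul_block_col map_row_mx map_mx1.
  rewrite !mul1mx mul0mx add0r mulNmx mul1mx opp_row_mx add_row_mx subrr.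
  by rewrite /block_mx.
have := congr1 determinant E.
rewrite det_mulmx det_ublock det_lblock !det1 !mul1r mulr1 => ->.
rewrite tau_sub detZ det_map_mx mulf_neq0 //.
  by rewrite expf_neq0 // mulf_neq0 // ?pnatr_eq0 // eq_complex /= negb_and oner_neq0 orbT.
by rewrite eq_complex /= negb_and hdet.
Qed.

Lemma cjK_mx m n (A : 'M[R[i]]_(m, n)) : map_mx cj (map_mx cj A) = A.
Proof. by apply/matrixP => i j; rewrite !mxE conjcK. Qed.

Lemma map_tr m n (A : 'M[R[i]]_(m, n)) : map_mx cj A^T = (map_mx cj A)^T.
Proof. by apply/matrixP => i j; rewrite !mxE. Qed.

Definition Ym := invmx Zm.
Definition Um : 'M[R[i]]_(g + g, g) := lsubmx Ym.
Definition Vm : 'M[R[i]]_(g + g, g) := rsubmx Ym.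

Lemma ZY_blocks : [/\ Pi *m Um = 1%:M, Pi *m Vm = 0, Pc *m Um = 0 & Pc *m Vm = 1%:M].
Proof.
have := mulmxV Z_unit; rewrite -/Ym -[Ym]hsubmxK /Zm mul_col_row scalar_mx_block.
by case/eq_block_mx => -> -> -> ->.
Qed.

Lemma UPV : Um *m Pi + Vm *m Pc = 1%:M.
Proof. by have := mulVmx Z_unit; rewrite -/Ym -[Ym]hsubmxK /Zm mul_row_col. Qed.

Lemma V_conj : Vm = map_mx cj Um.
Proof.
have [h1 h2 h3 h4] := ZY_blocks.
pose X := row_mx (map_mx cj Vm) (map_mx cj Um).
have ZX : Zm *m X = 1%:M.
  rewrite /Zm /X mul_col_row scalar_mx_block.
  have PcK : map_mx cj Pc = Pi by rewrite /Pc cjK_mx.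
  have e1 : Pi *m map_mx cj Vm = 1%:M by rewrite -PcK -map_mxM h4 map_mx1.
  have e2 : Pi *m map_mx cj Um = 0 by rewrite -PcK -map_mxM h3 map_mx0.
  have e3 : Pc *m map_mx cj Vm = 0 by rewrite /Pc -map_mxM h2 map_mx0.
  have e4 : Pc *m map_mx cj Um = 1%:M by rewrite /Pc -map_mxM h1 map_mx1.
  by rewrite e1 e2 e3 e4.
have : X = Ym by rewrite -[X]mul1mx -(mulVmx Z_unit) -mulmxA ZX mulmx1.
by move=> EX; rewrite /Vm -EX /X row_mxKr.
Qed.

Lemma U_conj : Um = map_mx cj Vm.
Proof. by rewrite V_conj cjK_mx. Qed.

Definition Wn : 'M[R[i]]_(g + g, g) := col_mx 1%:M (- tau).

Lemma V_ker : Vm = Wn *m usubmx Vm.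
Proof.
have [_ h2 _ _] := ZY_blocks.
have h : tau *m usubmx Vm + dsubmx Vm = 0.
  by move: h2; rewrite /Pi /period_matrix -{1}[Vm]vsubmxK mul_row_col mul1mx.
have hd : dsubmx Vm = - (tau *m usubmx Vm).
  by apply/eqP; rewrite -addr_eq0 addrC h.
by rewrite /Wn mul_col_mx mul1mx mulNmx -hd vsubmxK.
Qed.

Lemma VMV M : Wn^T *m M *m Wn = 0 -> Vm^T *m M *m Vm = 0.
Proof.
move=> h; rewrite V_ker trmx_mul.
have -> : (usubmx Vm)^T *m Wn^T *m M *m (Wn *m usubmx Vm)
   = (usubmx Vm)^T *m (Wn^T *m M *m Wn) *m usubmx Vm by rewrite !mulmxA.
by rewrite h mulmx0 mul0mx.
Qed.

Lemma UMU M : map_mx cj M = M -> Wn^T *m M *m Wn = 0 -> Um^T *m M *m Um = 0.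
Proof.
move=> Mr h; rewrite U_conj -map_tr -[M]Mr -!map_mxM VMV //.
by rewrite map_mx0.
Qed.

Definition Hc (M : 'M[R[i]]_(g + g)) : 'M[R[i]]_g :=
  (2%:R * 'i%C) *: (Um^T *m M *m Vm).

Lemma cj2i : cj (2%:R * 'i%C) = - (2%:R * 'i%C).
Proof. by apply/eqP; rewrite eq_complex /= !(mulr0, mul0r, mulr1, addr0, add0r, subr0, oppr0, eqxx). Qed.

Lemma Hc_herm M : map_mx cj M = M -> M^T = - M ->
  forall i j, Hc M i j = cj (Hc M j i).
Proof.
move=> Mr Ma.
suff E : (Hc M)^T = map_mx cj (Hc M).
  by move=> i j; have := congr1 (fun A : 'M[R[i]]_g => A j i) E; rewrite !mxE => ->.
rewrite /Hc map_mxZ [X in _ = X *: _](_ : _ = - (2%:R * 'i%C)); last exact: cj2i.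
rewrite [LHS]linearZ /= !trmx_mul trmxK Ma !map_mxM map_tr -U_conj -V_conj Mr.
by rewrite mulNmx mulmxN scaleNr scalerN mulmxA.
Qed.

Lemma cx1 (x m : R[i]) : cj m = m -> m = x + cj x ->
  real_complex R (complex.Im ((2%:R * 'i%C) * x)) = m.
Proof.
case: x => a b; case: m => c d /= [hd] [hc hd2].
by apply/eqP; rewrite eq_complex /= hc hd2; apply/andP; split; apply/eqP; ring.
Qed.

Lemma sandw m (X : 'M[R[i]]_(g + g, m)) (Y : 'M[R[i]]_(m, g + g)) M :
  (X *m Y)^T *m M *m (X *m Y) = Y^T *m (X^T *m M *m X) *m Y.
Proof. by rewrite trmx_mul !mulmxA. Qed.

Lemma Hc_Im M : map_mx cj M = M -> Wn^T *m M *m Wn = 0 ->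
  map_mx (fun z => real_complex R (complex.Im z)) (Pi^T *m Hc M *m Pc) = M.
Proof.
move=> Mr h.
set A := Um *m Pi; set Ab := Vm *m Pc.
have e1 : Pi^T *m Hc M *m Pc = (2%:R * 'i%C) *: (A^T *m M *m Ab).
  by rewrite /Hc -scalemxAr scalemxAl /A /Ab trmx_mul !mulmxA !scalemxAl.
have e2 : M = A^T *m M *m Ab + Ab^T *m M *m A.
  have E : A + Ab = 1%:M by exact: UPV.
  transitivity ((A + Ab)^T *m M *m (A + Ab)); first by rewrite E trmx1 mul1mx mulmx1.
  rewrite [(A + Ab)^T]linearD /= mulmxDl !mulmxDr /A /Ab !mulmxDl !sandw UMU // VMV //.
  by rewrite !mulmx0 !mul0mx addr0 add0r addrC.
have e3 : map_mx cj (A^T *m M *m Ab) = Ab^T *m M *m A.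
  have PcK : map_mx cj Pc = Pi by rewrite /Pc cjK_mx.
  by rewrite !map_mxM map_tr Mr /A /Ab !map_mxM -U_conj -V_conj PcK.
apply/matrixP => a b; rewrite e1 !mxE.
have ea := congr1 (fun X : 'M[R[i]]_(g + g) => X a b) e2.
have eb := congr1 (fun X : 'M[R[i]]_(g + g) => X a b) e3.
have ec := congr1 (fun X : 'M[R[i]]_(g + g) => X a b) Mr.
rewrite /= !mxE in ea eb ec.
apply: cx1 => //; rewrite [LHS]ea; congr (_ + _).
by rewrite eb.
Qed.

Definition MrH (H : 'M[R[i]]_g) : 'M[R[i]]_(g + g) :=
  map_mx (fun z => real_complex R (complex.Im z)) (Pi^T *m H *m Pc).

Lemma Hc_MrH (H : 'M[R[i]]_g) : (forall i j, H i j = cj (H j i)) -> Hc (MrH H) = H.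
Proof.
move=> hH; have [h1 h2 h3 h4] := ZY_blocks.
set P := Pi^T *m H *m Pc.
have e1 : MrH H = (2%:R^-1 * 'i%C) *: (map_mx cj P - P).
  apply/matrixP => a b; rewrite !mxE ImJ_sub; ring.
have PcK : map_mx cj Pc = Pi by rewrite /Pc cjK_mx.
have HT : map_mx cj H = H^T by apply/matrixP => a b; rewrite !mxE hH.
have e2 : map_mx cj P = Pc^T *m H^T *m Pi.
  by rewrite /P !map_mxM map_tr HT PcK.
have t1 : Um^T *m Pc^T = 0 by rewrite -trmx_mul h3 trmx0.
have t2 : Um^T *m Pi^T = 1%:M by rewrite -trmx_mul h1 trmx1.
have e3 : Um^T *m (Pc^T *m H^T *m Pi - P) *m Vm = - H.
  rewrite mulmxBr mulmxBl /P !mulmxA t1 t2 !mul0mx mul1mx sub0r.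
  by rewrite -mulmxA h4 mulmx1.
have e4 : forall c (Y : 'M[R[i]]_(g + g)), Um^T *m (c *: Y) *m Vm = c *: (Um^T *m Y *m Vm).
  by move=> c Y; rewrite -!mul_scalar_mx !mulmxA scalar_mxC.
rewrite /Hc e1 e2 e4 e3 scalerA scalerN.
have -> : 2%:R * 'i%C * (2%:R^-1 * 'i%C) = -1 :> R[i].
  by rewrite mulrCA !mulrA mulVf ?pnatr_eq0 // mul1r -expr2 sqr_i.
by rewrite scaleN1r opprK.
Qed.
End NS.


Section Q.
Variable g : nat.
Definition AofQ (a : {ffun Pidx g -> rat}) : 'M[rat]_g :=
  \matrix_(i, j) (pv a i j - pv a j i).
Definition BofQ (b : {ffun 'I_g * 'I_g -> rat}) : 'M[rat]_g :=
  \matrix_(i, j) b (i, j).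
Definition MofQ (t : Tdom g) : 'M[rat]_(g + g) :=
  block_mx (AofQ t.1.1) (BofQ t.1.2) (- (BofQ t.1.2)^T) (AofQ t.2).

Lemma Mof_ratr (R : realType) (t : Tdom g) : Mof R t = map_mx ratr (MofQ t).
Proof.
rewrite /Mof /MofQ map_block_mx map_mxN.
by congr block_mx; try congr (- _); apply/matrixP => i j; rewrite !mxE // rmorphB.
Qed.

Lemma pvD (a a' : {ffun Pidx g -> rat}) i j : pv (a + a') i j = pv a i j + pv a' i j.
Proof. by rewrite /pv; case: insubP => [p _ _|_] /=; rewrite ?ffunE ?addr0. Qed.

Lemma MofQD (t t' : Tdom g) : MofQ (t + t') = MofQ t + MofQ t'.
Proof.
rewrite /MofQ add_block_mx; congr block_mx; apply/matrixP => i j; rewrite !mxE /=.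
- by rewrite !pvD; ring.
- by rewrite ffunE.
- by rewrite ffunE; ring.
- by rewrite !pvD; ring.
Qed.

Lemma MofQ_tr (t : Tdom g) : (MofQ t)^T = - MofQ t.
Proof.
rewrite /MofQ tr_block_mx opp_block_mx; congr block_mx;
  apply/matrixP => i j; rewrite !mxE //; ring.
Qed.

Lemma pv_lt (a : {ffun Pidx g -> rat}) (i j : 'I_g) (h : (i < j)%N) :
  pv a i j = a (exist _ (i, j) h).
Proof. by rewrite /pv insubT. Qed.

Lemma MofQ_inj0 (t : Tdom g) : MofQ t = 0 -> t = 0.
Proof.
case: t => [[a b] c] /= h.
have E : forall x y, MofQ ((a, b), c) x y = 0 by move=> x y; rewrite h mxE.
have pa : a = 0.
  apply/ffunP => p; have := E (lshift g (val p).1) (lshift g (val p).2).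
  rewrite /MofQ block_mxEul mxE pv_val pv_ge ?subr0 ?ffunE //.
  by rewrite -leqNgt ltnW //; exact: (valP p).
have pc : c = 0.
  apply/ffunP => p; have := E (rshift g (val p).1) (rshift g (val p).2).
  rewrite /MofQ block_mxEdr mxE pv_val pv_ge ?subr0 ?ffunE //.
  by rewrite -leqNgt ltnW //; exact: (valP p).
have pb : b = 0.
  apply/ffunP => -[i k]; have := E (lshift g i) (rshift g k).
  by rewrite /MofQ block_mxEur mxE ffunE.
by rewrite pa pb pc.
Qed.

Lemma antisym_diag (Q : 'M[rat]_g) i : Q^T = - Q -> Q i i = 0.
Proof.
move=> h; have := congr1 (fun A : 'M[rat]_g => A i i) h; rewrite !mxE => /eqP.
by rewrite -addr_eq0 -mulr2n mulrn_eq0 /= => /eqP.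
Qed.

Lemma antisym_Aof (F : 'I_g -> 'I_g -> rat) :
  (forall i j, F j i = - F i j) ->
  AofQ [ffun p : Pidx g => F (val p).1 (val p).2] = \matrix_(i, j) F i j.
Proof.
move=> hF; apply/matrixP => i j; rewrite !mxE.
have Fii : forall k, F k k = 0.
  move=> k; have := hF k k => /eqP; rewrite -addr_eq0 -mulr2n mulrn_eq0 /=.
  by move/eqP.
case: (ltngtP i j) => h.
- by rewrite (pv_lt _ h) (pv_ge _ (_ : ~~ (j < i)%N)) ?ffunE ?subr0 // -leqNgt ltnW.
- by rewrite (pv_lt _ h) (pv_ge _ (_ : ~~ (i < j)%N)) ?ffunE ?sub0r -?hF // -leqNgt ltnW.
- have -> : i = j by apply: val_inj.
  by rewrite subrr Fii.
Qed.

Lemma MofQ_surj (Q : 'M[rat]_(g + g)) : Q^T = - Q -> exists t, MofQ t = Q.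
Proof.
move=> hQ.
have hQ' : forall x y, Q y x = - Q x y.
  by move=> x y; have := congr1 (fun A : 'M[rat]_(g + g) => A x y) hQ; rewrite !mxE.
pose a := [ffun p : Pidx g => Q (lshift g (val p).1) (lshift g (val p).2)].
pose b := [ffun p : 'I_g * 'I_g => Q (lshift g p.1) (rshift g p.2)].
pose c := [ffun p : Pidx g => Q (rshift g (val p).1) (rshift g (val p).2)].
exists ((a, b), c); rewrite /MofQ /= -[RHS]submxK; congr block_mx.
- rewrite (@antisym_Aof (fun i j => Q (lshift g i) (lshift g j))); last by move=> i j; rewrite hQ'.
  by apply/matrixP => i j; rewrite !mxE.
- by apply/matrixP => i j; rewrite !mxE ffunE.
- by apply/matrixP => i j; rewrite !mxE ffunE -hQ'.
- rewrite (@antisym_Aof (fun i j => Q (rshift g i) (rshift g j))); last by move=> i j; rewrite hQ'.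
  by apply/matrixP => i j; rewrite !mxE.
Qed.

Definition isZ (q : rat) : Prop := exists z : int, q = z%:~R.
Lemma isZB x y : isZ x -> isZ y -> isZ (x - y).
Proof. by move=> [z ->] [w ->]; exists (z - w); rewrite rmorphB. Qed.
Lemma isZ0 : isZ 0. Proof. by exists 0. Qed.
Lemma isZN x : isZ x -> isZ (- x).
Proof. by move=> h; rewrite -sub0r; apply: isZB => //; exact: isZ0. Qed.

Lemma pv_isZ (a : {ffun Pidx g -> rat}) i j : (forall p, isZ (a p)) -> isZ (pv a i j).
Proof. by move=> h; rewrite /pv; case: insubP => [p _ _|_] /=; [apply: h | exact: isZ0]. Qed.

Lemma MofQ_int (t : Tdom g) :
  (forall p, isZ (t.1.1 p)) -> (forall p, isZ (t.1.2 p)) -> (forall p, isZ (t.2 p)) ->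
  forall x y, isZ (MofQ t x y).
Proof.
move=> ha hb hc x y; rewrite /MofQ.
case: (split_ordP x) => i ->; case: (split_ordP y) => j ->.
- by rewrite block_mxEul mxE; apply: isZB; apply: pv_isZ.
- by rewrite block_mxEur mxE.
- by rewrite block_mxEdl !mxE; apply: isZN.
- by rewrite block_mxEdr mxE; apply: isZB; apply: pv_isZ.
Qed.
End Q.

Section K.
Variables (R : realType) (g : nat) (tau : 'M[R[i]]_g).

Lemma map_trG (A B : Type) (f : A -> B) m n (M : 'M[A]_(m, n)) :
  map_mx f M^T = (map_mx f M)^T.
Proof. by apply/matrixP => x y; rewrite !mxE. Qed.

Lemma Mof_tr (t : Tdom g) : (Mof R t)^T = - Mof R t.
Proof. by rewrite Mof_ratr -map_trG MofQ_tr map_mxN. Qed.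

Lemma Mof_real (t : Tdom g) : map_mx (@conjc R) (Mof R t) = Mof R t.
Proof. by apply/matrixP => x y; rewrite Mof_ratr !mxE fmorph_rat. Qed.

Lemma ker_W (t : Tdom g) : kerT tau t -> (Wm tau)^T *m Mof R t *m Wm tau = 0.
Proof.
move=> hk; set S := _ *m _ *m _.
have ST : S^T = - S by rewrite /S !trmx_mul trmxK Mof_tr mulNmx mulmxN mulmxA.
have hS : forall x y, S y x = - S x y.
  by move=> x y; have := congr1 (fun A : 'M[R[i]]_g => A x y) ST; rewrite !mxE.
have h0 : forall p : Pidx g, S (val p).1 (val p).2 = 0.
  by move=> p; rewrite /S -key hk ffunE.
apply/matrixP => i j; rewrite [in RHS]mxE.
case: (ltngtP i j) => h.
- exact: (h0 (exist (fun p : 'I_g * 'I_g => (p.1 < p.2)%N) (i, j) h)).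
- by rewrite hS (h0 (exist (fun p : 'I_g * 'I_g => (p.1 < p.2)%N) (j, i) h)) oppr0.
- have -> : i = j by apply: val_inj.
  by apply/eqP; have := hS j j => /eqP; rewrite -addr_eq0 -mulr2n mulrn_eq0.
Qed.
End K.


Section N2.
Variables (R : realType) (g : nat) (tau : 'M[R[i]]_g).
Local Notation cj := (@conjc R).

Lemma colform (H : 'M[R[i]]_g) a b :
  ((col a (period_matrix tau))^T *m H *m map_mx cj (col b (period_matrix tau))) ord0 ord0
  = ((Pi tau)^T *m H *m Pc tau) a b.
Proof.
rewrite tr_col map_col -row_mul !mxE; apply: eq_bigr => k _; rewrite !mxE.
by congr (_ * _); apply: eq_bigr => l _; rewrite !mxE.
Qed.

Lemma Pi_W : Pi tau *m Wn tau = 0.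
Proof. by rewrite /Pi /period_matrix /Wn mul_row_col mulmx1 mul1mx addrN. Qed.

Lemma sandZ m n p q (X : 'M[R[i]]_(m, n)) c (Y : 'M[R[i]]_(n, p)) (Z : 'M[R[i]]_(p, q)) :
  X *m (c *: Y) *m Z = c *: (X *m Y *m Z).
Proof. by rewrite -!mul_scalar_mx !mulmxA scalar_mxC. Qed.

Section Herm.
Variable H : 'M[R[i]]_g.
Hypothesis hH : forall i j, H i j = cj (H j i).

Let P := (Pi tau)^T *m H *m Pc tau.

Lemma MrH_E : MrH tau H = (2%:R^-1 * 'i%C) *: (map_mx cj P - P).
Proof. by apply/matrixP => a b; rewrite !mxE ImJ_sub; ring. Qed.

Lemma P_conj : map_mx cj P = P^T.
Proof.
have PcK : map_mx cj (Pc tau) = Pi tau by rewrite /Pc cjK_mx.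
have HT : map_mx cj H = H^T by apply/matrixP => a b; rewrite !mxE hH.
by rewrite /P !map_mxM map_tr HT PcK !trmx_mul trmxK mulmxA.
Qed.

Lemma MrH_tr : (MrH tau H)^T = - MrH tau H.
Proof.
by rewrite MrH_E linearZ /= linearB /= !P_conj trmxK -scalerN opprB.
Qed.

Lemma MrH_W : (Wn tau)^T *m MrH tau H *m Wn tau = 0.
Proof.
rewrite MrH_E sandZ mulmxBr mulmxBl P_conj.
have h1 : (Wn tau)^T *m P *m Wn tau = 0.
  by rewrite /P !mulmxA -trmx_mul Pi_W trmx0 !mul0mx.
have h2 : (Wn tau)^T *m P^T *m Wn tau = 0.
  by rewrite /P !trmx_mul trmxK !mulmxA -(mulmxA _ (Pi tau)) Pi_W mulmx0.
by rewrite h1 h2 subrr scaler0.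
Qed.
End Herm.
End N2.


Lemma TmapZ (R : realType) g (tau : 'M[R[i]]_g) q (x : Tdom g) :
  Tmap tau (scT q x) = [ffun p => ratr q * Tmap tau x p].
Proof.
apply/ffunP => p; rewrite [RHS]ffunE !TmapE /= TbZ TcZ ffunE rmorphM /=; ring.
Qed.

Lemma iota_coords g (w : 'rV[rat]_(Nd g)) :
  (forall k, isZ (w 0 k)) ->
  [/\ forall p, isZ ((iota w).1.1 p), forall p, isZ ((iota w).1.2 p)
    & forall p, isZ ((iota w).2 p)].
Proof. by move=> h; split => p; rewrite /iota /fov /= ffunE !mxE. Qed.

Theorem proposition2p1 (R : realType) (g : nat) (tau : 'M[R[i]]_g) :
  \det (map_mx (@complex.Im R) tau) != 0 ->
  exists rho r : nat,
    picard_number tau rho /\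
    has_rank (kerT tau) rho /\
    has_rank (imT tau) r /\
    rho = (2 * g ^ 2 - g - r)%N.
Proof.
move=> hdet.
pose TI := fun v : 'rV[rat]_(Nd g) => Tmap tau (iota v).
have TID : forall v w, TI (v + w) = TI v + TI w.
  by move=> v w; rewrite /TI iotaD TmapD.
have TI0 : TI 0 = 0 := fadd0 TID.
pose K := fun v => TI v = 0.
have [d [B [fB [KB KS]]]] := max_basis K.
have Kcl : forall v, (v <= B)%MS -> K v.
  move=> v /mulmxKpV <-; rewrite mulmx_sum_row /K.
  elim/big_ind: _ => //; first by move=> x y hx hy; rewrite TID hx hy addr0.
  move=> i _; rewrite /TI iotaZ TmapZ.
  have E := KB i; rewrite /K /TI in E; rewrite E.
  by apply/ffunP => p; rewrite !ffunE mulr0.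
have hk : has_rank (kerT tau) d.
  apply: (@CL _ _ d (fun x => iota (x *m B))).
  - by move=> x y; rewrite mulmxDl iotaD.
  - by move=> x y /iota_inj /(row_free_inj fB).
  - by move=> x; exists 1%N => //; rewrite mulr1n; apply: Kcl; rewrite submxMl.
  - move=> s hs; have Ks : K (kappa s) by rewrite /K /TI iotaK.
    by exists (kappa s *m pinvmx B); rewrite mulmxKpV ?iotaK //; apply: KS.
pose X := row_base (B^C)%MS.
have XC : (X :=: B^C)%MS by exact: eq_row_base.
pose fI := fun y : 'rV[rat]_(\rank (B^C)%MS) => TI (y *m X).
have fID : forall y y', fI (y + y') = fI y + fI y'.
  by move=> y y'; rewrite /fI mulmxDl TID.
have hi : has_rank (imT tau) (\rank (B^C)%MS).
  apply: (@CL _ _ _ fI) => //.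
  - move=> y y' E.
    have h0 : fI (y - y') = 0 by rewrite fID (faddN fID) E subrr.
    have s1 : ((y - y') *m X <= B)%MS by apply: KS.
    have s2 : ((y - y') *m X <= B^C)%MS by rewrite -XC submxMl.
    have : ((y - y') *m X <= (B :&: B^C))%MS by rewrite sub_capmx s1 s2.
    rewrite capmx_compl submx0 => /eqP h.
    apply/eqP; rewrite -subr_eq0; apply/eqP; apply: (row_free_inj (row_base_free _)).
    by rewrite h mul0mx.
  - by move=> x; exists 1%N => //; exists (iota ((x *+ 1) *m X)).
  - move=> s [t <-].
    have : (kappa t <= B + B^C)%MS by apply: submx_full; exact: addsmx_compl_full.
    case/sub_addsmxP => u hu.
    have sX : (u.2 *m B^C <= X)%MS by rewrite XC submxMl.
    exists (u.2 *m (B^C)%MS *m pinvmx X); rewrite /fI mulmxKpV //.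
    have : TI (kappa t) = TI (u.1 *m B) + TI (u.2 *m (B^C)%MS) by rewrite hu TID.
    by rewrite /TI iotaK => ->; have := Kcl _ (submxMl u.1 B); rewrite /K /TI => ->; rewrite add0r.
have kerB : forall x, kerT tau (iota (x *m B)) by move=> x; exact: (Kcl _ (submxMl x B)).
pose fN := fun x : 'rV[rat]_d => Hc tau (Mof R (iota (x *m B))).
have fND : forall x y, fN (x + y) = fN x + fN y.
  move=> x y; rewrite /fN mulmxDl iotaD !Mof_ratr MofQD map_mxD.
  by rewrite /Hc mulmxDr mulmxDl scalerDr.
have hn : picard_number tau d.
  apply: (@CL _ _ d fN).
  - exact: fND.
  - move=> x y E; apply/eqP; rewrite -subr_eq0; apply/eqP.
    set z := x - y.
    have fz : fN z = 0 by rewrite /z fND (faddN fND) E subrr.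
    have hM := Hc_Im hdet (Mof_real R (iota (z *m B))) (ker_W (kerB z)).
    move: fz; rewrite /fN => fz; rewrite fz mulmx0 mul0mx in hM.
    have M0 : MofQ (iota (z *m B)) = 0.
      apply/matrixP => a b; have := congr1 (fun A : 'M[R[i]]_(g + g) => A a b) hM.
      rewrite Mof_ratr !mxE => /esym /eqP; rewrite fmorph_eq0 => /eqP ->.
      done.
    have t0 := MofQ_inj0 M0.
    have : iota (z *m B) = iota (0 *m B) by rewrite t0 mul0mx (fadd0 (@iotaD g)).
    by move/iota_inj/(row_free_inj fB).
  - move=> x.
    have [m m0 hz] := clear_den (fun k => (x *m B) 0 k).
    exists m => //.
    set w := (x *+ m) *m B.
    have hw : forall k, isZ (w 0 k).
      move=> k; have [z hzk] := hz k; exists z; rewrite hzk.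
      by rewrite /w -scaler_nat -scalemxAl !mxE mulrC.
    have [h1 h2 h3] := iota_coords hw.
    have kt : kerT tau (iota w) by exact: kerB.
    rewrite /fN -/w; split.
      move=> i j; have h := Hc_herm hdet (M := Mof R (iota w)).
      apply: h; [exact: Mof_real | exact: Mof_tr].
    move=> a b; rewrite colform.
    have hM := Hc_Im hdet (Mof_real R (iota w)) (ker_W kt).
    have := congr1 (fun A : 'M[R[i]]_(g + g) => A a b) hM.
    rewrite [in RHS]Mof_ratr [X in _ = X]mxE [X in X = _]mxE => E.
    have [z hzab] := MofQ_int h1 h2 h3 a b.
    exists z; apply: complexI; rewrite E hzab !rmorph_int //.
  - move=> H [hH hz].
    have hz' : forall ab : 'I_(g + g) * 'I_(g + g), exists z : int,
        complex.Im (((Pi tau)^T *m H *m Pc tau) ab.1 ab.2) = z%:~R.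
      by move=> [a b]; rewrite -colform; exact: hz.
    have [zf hzf] := fin_all_exists hz'.
    pose Q : 'M[rat]_(g + g) := \matrix_(a, b) (zf (a, b))%:~R.
    have EQ : map_mx ratr Q = MrH tau H.
      apply/matrixP => a b; rewrite [LHS]mxE /Q [X in ratr X]mxE [RHS]mxE.
      have := hzf (a, b); rewrite /= => ->.
      by rewrite !rmorph_int.
    have QT : Q^T = - Q.
      apply/matrixP => a b.
      have := congr1 (fun A : 'M[R[i]]_(g + g) => A a b) (MrH_tr tau hH).
      rewrite -EQ !mxE -rmorphN; exact: fmorph_inj.
    have [t ht] := MofQ_surj QT.
    have MtE : Mof R t = MrH tau H by rewrite Mof_ratr ht EQ.
    have kt : kerT tau t.
      have W0 : (Wm tau)^T *m MrH tau H *m Wm tau = 0 := MrH_W tau hH.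
      by apply/ffunP => p; rewrite key ffunE MtE W0 mxE.
    have Kt : K (kappa t) by rewrite /K /TI iotaK.
    exists (kappa t *m pinvmx B); rewrite /fN mulmxKpV ?iotaK ?MtE ?(Hc_MrH hdet hH) //.
    exact: KS.
exists d, (\rank (B^C)%MS); split => //; split => //; split => //.
rewrite mxrank_compl (eqP fB) -Nd_val.
have := rank_leq_col B; rewrite (eqP fB); lia.
Qed.
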